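(* Let $p$ be a prime, $\mu\ge1$, $m=p^\mu$, and $n>2$. Let $A=(a_{ij})$ be a random symmetric $n\times n$ matrix over $\mathbf{Z}_m$, conditioned on $a_{11}\equiv0\pmod p$ and $a_{12}\not\equiv0\pmod p$. Then there is an $n\times n$ matrix $V$ (depending on $A$) such that $$VAV^T\equiv\begin{pmatrix} a_{11} & a_{12} & 0\\ a_{21} & a_{22} & 0\\ 0 & 0 & A''\end{pmatrix}\pmod{p^\mu},$$ where the off-diagonal blocks are zero and $A''$ is a random symmetric $(n-2)\times(n-2)$ matrix over $\mathbf{Z}_m$ (i.e. under the stated conditional distribution of $A$, $A''$ reduced mod $m$ is uniformly distributed over symmetric $(n-2)\times(n-2)$ matrices over $\mathbf{Z}_m$).
   Context: For a positive integer $m$, $\mathbf{Z}_m=\{1,2,\ldots,m\}$ (viewed as residues mod $m$). A random symmetric $n\times n$ matrix over $\mathbf{Z}_m$ is one whose entries $a_{ij}$, $i\le j$, are chosen independently and uniformly from $\mathbf{Z}_m$, with $a_{ji}=a_{ij}$. *)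

(* Defs.v *)
From HB Require Import structures.
From mathcomp Require Import all_boot all_order all_algebra.
Set Implicit Arguments. Unset Strict Implicit. Unset Printing Implicit Defensive.
Import GRing.Theory.
Local Open Scope ring_scope.

Definition split2 (n : nat) (h : (2 <= n)%N) : (2 + (n - 2) = n)%N := subnKC h.

Definition unsplit_mx (R : Type) (n : nat) (h : (2 <= n)%N) (A : 'M[R]_n)
  : 'M[R]_(2 + (n - 2)) := castmx (esym (split2 h), esym (split2 h)) A.

Definition topleft2 (R : Type) (n : nat) (h : (2 <= n)%N) (A : 'M[R]_n) : 'M[R]_2 :=
  ulsubmx (unsplit_mx h A).

Definition blockdiag2 (R : nmodType) (n : nat) (h : (2 <= n)%N)
  (B : 'M[R]_2) (C : 'M[R]_(n - 2)) : 'M[R]_n :=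
  castmx (split2 h, split2 h) (block_mx B 0 0 C).

Definition symmetricb (R : eqType) (n : nat) (A : 'M[R]_n) : bool := A^T == A.

Definition cond_event (m p n : nat) (h : (2 <= n)%N) (A : 'M['Z_m]_n) : bool :=
  let B := topleft2 h A in
  ((val (B ord0 ord0) %% p == 0)%N && (val (B ord0 ord_max) %% p != 0)%N).

(* the (finite, uniform) sample space: symmetric matrices satisfying the condition *)
Definition sample_space (m p n : nat) (h : (2 <= n)%N) : {set 'M['Z_m]_n} :=
  [set A | symmetricb A && cond_event p h A].

(* Main.v *)
Require Import Defs.
From HB Require Import structures.
From mathcomp Require Import all_boot all_order all_algebra.
Import GRing.Theory.
Local Open Scope ring_scope.
Set Implicit Arguments. Unset Strict Implicit.
Lemma det22 (R : comNzRingType) (B : 'M[R]_2) : \det B = B 0 0 * B 1 1 - B 0 1 * B 1 0.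
Proof.
rewrite (expand_det_row _ ord0) !big_ord_recl big_ord0 /cofactor !det_mx11.
rewrite !mxE /= expr0 mul1r expr1 mulN1r addr0 mulrN.
have -> : lift ord0 (0 : 'I_1) = 1 :> 'I_2 by apply/val_inj.
have -> : lift (1 : 'I_2) (0 : 'I_1) = 0 :> 'I_2 by apply/val_inj.
by [].
Qed.

Section S.
Variables (R : comUnitRingType) (k : nat).
Definition schur (A : 'M[R]_(2 + k)) : 'M[R]_k :=
  drsubmx A - dlsubmx A *m invmx (ulsubmx A) *m ursubmx A.
Definition Vb (A : 'M[R]_(2 + k)) : 'M[R]_(2 + k) :=
  block_mx 1%:M 0 (- (dlsubmx A *m invmx (ulsubmx A))) 1%:M.

Lemma Vb_prop A : A^T = A -> ulsubmx A \in unitmx ->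
  Vb A *m A *m (Vb A)^T = block_mx (ulsubmx A) 0 0 (schur A).
Proof.
move=> hs hu.
have hB : (ulsubmx A)^T = ulsubmx A by rewrite trmx_ulsub hs.
have hC : (dlsubmx A)^T = ursubmx A by rewrite trmx_dlsub hs.
rewrite /Vb /schur tr_block_mx !trmx0 !trmx1.
have trN (a b : nat) (X : 'M[R]_(a,b)) : (- X)^T = - X^T by apply/matrixP=> i j; rewrite !mxE.
rewrite trN trmx_mul trmx_inv hB hC.
rewrite -{3}[A]submxK !mulmx_block.
rewrite !mul1mx !mul0mx !addr0 !mulmx1 !mulmx0 !addr0.
have e1 : - (dlsubmx A *m invmx (ulsubmx A)) *m ulsubmx A = - dlsubmx A.
  by rewrite mulNmx -mulmxA mulVmx // mulmx1.
rewrite e1 addNr mul0mx add0r mulmxN !mulmxA mulmxV // mul1mx addNr.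
by rewrite mulNmx addrC.
Qed.

Lemma schur_sym A : A^T = A -> (schur A)^T = schur A.
Proof.
move=> hs.
have hB : (ulsubmx A)^T = ulsubmx A by rewrite trmx_ulsub hs.
have hC : (dlsubmx A)^T = ursubmx A by rewrite trmx_dlsub hs.
have hC' : (ursubmx A)^T = dlsubmx A by rewrite trmx_ursub hs.
have hD : (drsubmx A)^T = drsubmx A by rewrite trmx_drsub hs.
have trN (a b : nat) (X Y : 'M[R]_(a,b)) : (X - Y)^T = X^T - Y^T by apply/matrixP=> i j; rewrite !mxE.
by rewrite /schur trN !trmx_mul trmx_inv hB hC hC' hD mulmxA.
Qed.

Lemma schur_shift A (E : 'M[R]_k) :
  schur (A + block_mx 0 0 0 E) = schur A + E.
Proof.
rewrite /schur -[A]submxK add_block_mx !addr0 !block_mxKul !block_mxKur !block_mxKdl !block_mxKdr.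
by rewrite addrAC.
Qed.
End S.

Lemma unit_B (p mu : nat) (B : 'M['Z_(p ^ mu)]_2) : prime p -> (1 <= mu)%N ->
  B^T = B -> (val (B ord0 ord0) %% p == 0)%N -> (val (B ord0 ord_max) %% p != 0)%N ->
  B \in unitmx.
Proof.
move=> hp hmu hs h0 h1.
have m1 : (1 < p ^ mu)%N.
  by rewrite -(expn0 p) ltn_exp2l ?prime_gt1.
have pm : (p %| p ^ mu)%N by apply: dvdn_exp.
have e10 : B 1 0 = B ord0 ord_max.
  by rewrite -[in RHS]hs mxE; congr (B _ _); apply/val_inj.
have e01 : B 0 1 = B ord0 ord_max by congr (B _ _); apply/val_inj.
have e00 : B 0 0 = B ord0 ord0 by [].
set a := B ord0 ord0 in h0 e00 *; set b := B ord0 ord_max in h1 e10 e01 *.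
set d := B 1 1.
have hdet : \det B + b * b = a * d by rewrite det22 e10 e01 subrK.
rewrite unitmxE -[\det B]natr_Zp unitZpE // coprime_pexpl // prime_coprime //.
apply/negP => hu.
have hv : ((val (\det B) + val b * val b)%:R : 'Z_(p ^ mu)) = (val a * val d)%:R.
  by rewrite natrD !natrM !natr_Zp.
have := congr1 (@nat_of_ord _) hv; rewrite !val_Zp_nat // => hv'.
have hp' : ((val (\det B) + val b * val b) %% p = 0)%N.
  rewrite -(modn_dvdm _ pm) hv' (modn_dvdm _ pm).
  by rewrite -modnMml (eqP h0) mul0n mod0n.
move/eqP: hp'; rewrite -/(dvdn p _) dvdn_addr // Euclid_dvdM // orbb /dvdn.
by rewrite (negbTE h1).
Qed.

Lemma cast_conj a b (e : a = b) (R : comUnitRingType) (V A : 'M[R]_a) :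
  castmx (e,e) V *m castmx (e,e) A *m (castmx (e,e) V)^T = castmx (e,e) (V *m A *m V^T).
Proof. by case: b / e. Qed.

Lemma castmxD a b c d (e1 : a = b) (e2 : c = d) (R : nmodType) (X Y : 'M[R]_(a,c)) :
  castmx (e1,e2) (X + Y) = castmx (e1,e2) X + castmx (e1,e2) Y.
Proof. by case: b / e1; case: d / e2. Qed.

Lemma trD a b (R : nmodType) (X Y : 'M[R]_(a,b)) : (X + Y)^T = X^T + Y^T.
Proof. by apply/matrixP=> i j; rewrite !mxE. Qed.

Section Main.
Variables (p mu n : nat) (hp : prime p) (hmu : (1 <= mu)%N) (h : (2 <= n)%N).
Local Notation m := (p ^ mu)%N.
Local Notation U A := (unsplit_mx h A).

Lemma symU (A : 'M['Z_m]_n) : symmetricb A -> (U A)^T = U A.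
Proof. by move/eqP=> hs; rewrite /unsplit_mx trmx_cast /= hs. Qed.

Lemma S_unit A : A \in sample_space m p h -> ulsubmx (U A) \in unitmx.
Proof.
rewrite inE => /andP [hs /andP [h0 h1]].
apply: unit_B => //; by rewrite trmx_ulsub symU.
Qed.

Definition Vf (A : 'M['Z_m]_n) : 'M['Z_m]_n := castmx (split2 h, split2 h) (Vb (U A)).
Definition Af (A : 'M['Z_m]_n) : 'M['Z_m]_(n - 2) := schur (U A).

Lemma part1 A : A \in sample_space m p h ->
  Vf A *m A *m (Vf A)^T = blockdiag2 h (topleft2 h A) (Af A).
Proof.
move=> hA; have hA' := hA; rewrite inE in hA'; case/andP: hA' => hs _.
rewrite /Vf -{2}[A](castmxKV (split2 h) (split2 h)) cast_conj.
by rewrite Vb_prop ?symU ?S_unit.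
Qed.

Lemma part2 A : A \in sample_space m p h -> symmetricb (Af A).
Proof.
by rewrite inE => /andP [hs _]; apply/eqP; rewrite /Af schur_sym // symU.
Qed.

Definition shiftD (E : 'M['Z_m]_(n - 2)) : 'M['Z_m]_n :=
  castmx (split2 h, split2 h) (block_mx 0 0 0 E).

Lemma U_shift A E : U (A + shiftD E) = U A + block_mx 0 0 0 E.
Proof. by rewrite /unsplit_mx castmxD /shiftD castmxK. Qed.

Lemma in_shift A E : symmetricb E -> A \in sample_space m p h ->
  A + shiftD E \in sample_space m p h.
Proof.
move/eqP=> hE; rewrite !inE => /andP [hs hc]; apply/andP; split.
  by rewrite /symmetricb trD (eqP hs) /shiftD trmx_cast /= tr_block_mx !trmx0 hE.
have ht : topleft2 h (A + shiftD E) = topleft2 h A.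
  by rewrite /topleft2 U_shift -[U A]submxK add_block_mx addr0 !block_mxKul.
by rewrite /cond_event ht.
Qed.

Lemma Af_shift A E : Af (A + shiftD E) = Af A + E.
Proof. by rewrite /Af U_shift schur_shift. Qed.

Lemma card_le (B1 B2 : 'M['Z_m]_(n - 2)) : symmetricb B1 -> symmetricb B2 ->
  (#|[set A in sample_space m p h | Af A == B1]| <=
   #|[set A in sample_space m p h | Af A == B2]|)%N.
Proof.
move=> s1 s2.
have sE : symmetricb (B2 - B1).
  move/eqP: s1 => s1; move/eqP: s2 => s2; apply/eqP.
  apply/matrixP=> i j; rewrite !mxE.
  have e1 : B1 j i = B1 i j by rewrite -[in RHS]s1 mxE.
  have e2 : B2 j i = B2 i j by rewrite -[in RHS]s2 mxE.
  by rewrite e1 e2.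
rewrite -(card_imset _ (addIr (shiftD (B2 - B1)))).
apply: subset_leq_card; apply/subsetP => X /imsetP [A].
rewrite inE => /andP [hA /eqP hB] ->.
by rewrite inE in_shift //= Af_shift hB addrC subrK.
Qed.
End Main.

Theorem lemma2p2 (p mu n : nat) (hp : prime p) (hmu : (1 <= mu)%N)
  (hn : (2 < n)%N) :
  let m := (p ^ mu)%N in
  let h : (2 <= n)%N := ltnW hn in
  exists (V : 'M['Z_m]_n -> 'M['Z_m]_n) (A'' : 'M['Z_m]_n -> 'M['Z_m]_(n - 2)),
    (forall A, A \in sample_space m p h ->
       V A *m A *m (V A)^T = blockdiag2 h (topleft2 h A) (A'' A)) /\
    (* A'' is uniformly distributed over symmetric (n-2)x(n-2) matrices *)
    (forall A, A \in sample_space m p h -> symmetricb (A'' A)) /\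
    (forall B1 B2 : 'M['Z_m]_(n - 2), symmetricb B1 -> symmetricb B2 ->
       #|[set A in sample_space m p h | A'' A == B1]| =
       #|[set A in sample_space m p h | A'' A == B2]|).
Proof.
move=> m h.
exists (Vf h), (Af h); split; first exact: part1.
split; first exact: part2.
move=> B1 B2 s1 s2; apply/eqP; rewrite eqn_leq.
by rewrite !card_le.
Qed.
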